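(* Let $H$ be a $\{P,C\}$-free 3-graph on vertex set $V$, let $e_1,e_2\in H$ with $e_1\cap e_2=\{x\}$, and set $U=e_1\cup e_2$ (so $|U|=5$) and $W=V\setminus U$. If $H[W]$ contains a copy $Q$ of $P^3_2$, then the number of edges of $H$ meeting both $U$ and $V(Q)$ is at most $4$.
   Context: All hypergraphs are 3-uniform; $H[S]$ is the sub-3-graph induced on $S$. $P$ is the loose 3-uniform path of length 3: vertices $a,b,c,d,e,f,g$, edges $\{a,b,c\},\{c,d,e\},\{e,f,g\}$. $C$ is the loose triangle: vertices $x_1,x_2,x_3,y_1,y_2,y_3$, edges $\{x_1,y_3,x_2\},\{x_2,y_1,x_3\},\{x_3,y_2,x_1\}$. $P^3_2$ is two edges sharing exactly one vertex (5 vertices). $\{P,C\}$-free means containing no copy of $P$ and no copy of $C$. *)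

(* Defs.v *)
From mathcomp Require Import all_boot.
Set Implicit Arguments. Unset Strict Implicit. Unset Printing Implicit Defensive.

Definition uniform3 (V : finType) (H : {set {set V}}) : Prop :=
  forall e, e \in H -> #|e| = 3.

Definition has_P (V : finType) (H : {set {set V}}) : Prop :=
  exists a b c d e f g : V,
    uniq [:: a; b; c; d; e; f; g] /\
    [set a; b; c] \in H /\ [set c; d; e] \in H /\ [set e; f; g] \in H.

Definition has_C (V : finType) (H : {set {set V}}) : Prop :=
  exists x1 x2 x3 y1 y2 y3 : V,
    uniq [:: x1; x2; x3; y1; y2; y3] /\
    [set x1; y3; x2] \in H /\ [set x2; y1; x3] \in H /\ [set x3; y2; x1] \in H.

Definition PC_free (V : finType) (H : {set {set V}}) : Prop :=
  ~ has_P H /\ ~ has_C H.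

Definition induced (V : finType) (H : {set {set V}}) (S : {set V}) : {set {set V}} :=
  [set e in H | e \subset S].

Definition n_meet_both (V : finType) (H : {set {set V}}) (A B : {set V}) : nat :=
  #|[set e in H | (e :&: A != set0) && (e :&: B != set0)]|.

(* Main.v *)
Require Import Defs.
From mathcomp Require Import all_boot.
From mathcomp Require Import zify.

Section S.
Variable V : finType.
Implicit Types (A B f : {set V}).

Lemma card1_sub A B z : A \subset B -> #|B| = 1 -> z \in A -> #|A| = 1.
Proof.
move=> sAB cB zA; have := subset_leq_card sAB; rewrite cB.
have : 0 < #|A| by apply/card_gt0P; exists z.
lia.
Qed.

Lemma set3_eq (g : {set V}) a b c : uniq [:: a; b; c] -> a \in g -> b \in g -> c \in g ->
  #|g| = 3 -> [set a; b; c] = g.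
Proof.
move=> u ag bg cg c3; apply/eqP; rewrite eqEcard; apply/andP; split.
  by apply/subsetP => z; rewrite !inE => /orP [/orP [] | ] /eqP ->.
rewrite c3 -setUA !cardsU1 cards1 !inE.
move: u => /= ; rewrite !inE negb_or => /andP [] /andP [] -> -> /andP [] -> _.
done.
Qed.

Lemma ar (n m : nat) : 3 = 1 + m -> m = 1 + n -> n == 1.
Proof. lia. Qed.

Ltac diseq :=
  repeat (apply/andP; split); rewrite ?negb_or;
  repeat (apply/andP; split);
  try done; try (rewrite eq_sym; done);
  apply/eqP => E; subst;
  match goal with
  | H1 : is_true (?z \in ?s), H2 : is_true (~~ (?z \in ?s)) |- _ => by rewrite H1 in H2
  | H : is_true (?z != ?z) |- _ => by rewrite eqxx in H
  end.

Lemma GP (H : {set {set V}}) (g1 g2 g3 : {set V}) : uniform3 H -> g1 \in H -> g2 \in H -> g3 \in H ->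
  #|g1 :&: g2| = 1 -> #|g2 :&: g3| = 1 -> g1 :&: g3 = set0 -> has_P H.
Proof.
move=> H3 h1 h2 h3 /eqP/cards1P [c Ec] /eqP/cards1P [e Ee] E13.
have c1 : c \in g1 by have := set11 c; rewrite -Ec inE => /andP [].
have c2 : c \in g2 by have := set11 c; rewrite -Ec inE => /andP [].
have e2 : e \in g2 by have := set11 e; rewrite -Ee inE => /andP [].
have e3 : e \in g3 by have := set11 e; rewrite -Ee inE => /andP [].
have n13 z : z \in g1 -> z \notin g3.
  by move=> z1; apply/negP => z3; have := in_set0 z; rewrite -E13 inE z1 z3.
have n12 z : z \in g1 -> z != c -> z \notin g2.
  move=> z1 zc; apply/negP => z2; move: zc; have : z \in g1 :&: g2 by rewrite inE z1 z2.
  by rewrite Ec inE => ->.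
have n32 z : z \in g3 -> z != e -> z \notin g2.
  move=> z3 ze; apply/negP => z2; move: ze; have : z \in g2 :&: g3 by rewrite inE z3 z2.
  by rewrite Ee inE => ->.
have n21 z : z \in g2 -> z != c -> z \notin g1.
  by move=> z2 zc; apply/negP => z1; move: (n12 z z1 zc); rewrite z2.
have n23 z : z \in g2 -> z != e -> z \notin g3.
  by move=> z2 ze; apply/negP => z3; move: (n32 z z3 ze); rewrite z2.
have c3 : c \notin g3 by apply: n13.
have e1 : e \notin g1 by apply/negP => /n13; rewrite e3.
have ce : c != e by apply/eqP => E; move: c3; rewrite E e3.
have : #|g1 :\ c| == 2 by move: (cardsD1 c g1); rewrite H3 // c1 add1n => -[<-].
move=> /cards2P [a [b [ab Eab]]].
have : a \in g1 :\ c by rewrite Eab !inE eqxx.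
rewrite !inE => /andP [ac a1].
have : b \in g1 :\ c by rewrite Eab !inE eqxx orbT.
rewrite !inE => /andP [bc b1].
have : #|g3 :\ e| == 2 by move: (cardsD1 e g3); rewrite H3 // e3 add1n => -[<-].
move=> /cards2P [f [g [fg Efg]]].
have : f \in g3 :\ e by rewrite Efg !inE eqxx.
rewrite !inE => /andP [fe f3].
have : g \in g3 :\ e by rewrite Efg !inE eqxx orbT.
rewrite !inE => /andP [ge g3'].
have : #|g2 :\ c :\ e| == 1.
  move: (cardsD1 c g2) (cardsD1 e (g2 :\ c)); rewrite H3 // c2 !inE (eq_sym e c) ce e2 /= => E1 E2; move: E1; rewrite E2; by case; rewrite add0n => <-.
move=> /cards1P [d Ed].
have : d \in g2 :\ c :\ e by rewrite Ed inE.
rewrite !inE => /andP [de /andP [dc d2]].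
have a2 := n12 a a1 ac; have b2 := n12 b b1 bc.
have a3 := n13 a a1; have b3 := n13 b b1.
have d1 := n21 d d2 dc; have d3 := n23 d d2 de.
have f2 := n32 f f3 fe; have g2' := n32 g g3' ge.
exists a, b, c, d, e, f, g.
split; first by rewrite /=; rewrite !inE; diseq.
split; first by rewrite (@set3_eq g1 _ _ _) ?H3 // /= !inE; diseq.
split; first by rewrite (@set3_eq g2 _ _ _) ?H3 // /= !inE; diseq.
by rewrite (@set3_eq g3 _ _ _) ?H3 // /= !inE; diseq.
Qed.

Lemma ar2 a b : 1 < a -> 0 < b -> a + b <= 3 -> a = 2 /\ b = 1.
Proof. lia. Qed.

Lemma ar3 a : a <= 2 -> a != 1 -> a <> 2 -> a == 0.
Proof. lia. Qed.

Lemma ar4 a : a <= 1 -> 0 < a -> a = 1.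
Proof. lia. Qed.

Lemma sum3 (f A B : {set V}) : #|f| = 3 -> A :&: B = set0 ->
  #|f :&: A| + #|f :&: B| <= 3.
Proof.
move=> c3 D.
have dAB : (f :&: A) :&: (f :&: B) = set0.
  apply/eqP; rewrite -subset0 -D; by apply: setISS; apply: subsetIr.
rewrite -cardsUI dAB cards0 addn0 -c3; apply: subset_leq_card.
by rewrite subUset !subsetIl.
Qed.

Lemma sub2 (f e1 e2 : {set V}) x : #|e1| = 3 -> e1 :&: e2 = [set x] ->
  #|f :&: e2| != 1 -> #|f :&: (e1 :|: e2)| = 2 -> #|f :&: e1| = 2 ->
  f :&: (e1 :|: e2) = e1 :\ x.
Proof.
move=> c3 E n2 cU c1.
have x1 : x \in e1 by have := set11 x; rewrite -E inE => /andP [].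
have x2 : x \in e2 by have := set11 x; rewrite -E inE => /andP [].
have E1 : f :&: e1 = f :&: (e1 :|: e2).
  apply/eqP; rewrite eqEcard cU c1 leqnn andbT; apply: setIS; apply: subsetUl.
have xf : x \notin f.
  apply/negP => xf; move: n2.
  have s : f :&: e2 \subset [set x].
    rewrite -E; apply/subsetP => z; rewrite !inE => /andP [zf ze2].
    have : z \in f :&: e1 by rewrite E1 !inE zf ze2 orbT.
    by rewrite inE => /andP [_ ->].
  by rewrite (@card1_sub _ _ x s (cards1 x)) // inE xf x2.
rewrite -E1; apply/eqP; rewrite eqEcard; apply/andP; split.
  apply/subsetP => z; rewrite !inE => /andP [zf ->]; rewrite andbT.
  by apply/eqP => zx; move: xf; rewrite -zx zf.
by rewrite c1; move: (cardsD1 x e1); rewrite c3 x1 => -[]; rewrite add0n => <-.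
Qed.

Lemma half (H : {set {set V}}) (e1 e2 q1 q2 : {set V}) x y f :
  uniform3 H -> ~ has_P H -> e1 \in H -> e2 \in H -> q1 \in H -> q2 \in H -> f \in H ->
  e1 :&: e2 = [set x] -> q1 :&: q2 = [set y] ->
  (e1 :|: e2) :&: (q1 :|: q2) = set0 ->
  1 < #|f :&: (e1 :|: e2)| -> f :&: (q1 :|: q2) != set0 ->
  f = (e1 :\ x) :|: [set y] \/ f = (e2 :\ x) :|: [set y].
Proof.
move=> H3 nP h1 h2 k1 k2 hf E12 Q12 D ge2 ne.
have [cU cQ] : #|f :&: (e1 :|: e2)| = 2 /\ #|f :&: (q1 :|: q2)| = 1.
  by apply: ar2 => //; [rewrite card_gt0 | apply: sum3; rewrite ?H3].
move/eqP/cards1P: (cQ) => [v Ev].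
have : v \in f :&: (q1 :|: q2) by rewrite Ev set11.
rewrite inE => /andP [vf vQ].
have : exists qv qo, [/\ qv \in H, qo \in H, v \in qv,
    qv :&: qo = [set y] & (qv \subset q1 :|: q2) && (qo \subset q1 :|: q2)].
  move: vQ; rewrite inE => /orP [vq|vq]; [exists q1, q2 | exists q2, q1];
    split => //; rewrite ?subsetUl ?subsetUr //; by rewrite setIC.
move=> [qv [qo [kv ko vq Eqq /andP [sv so]]]].
have cvf : #|qv :&: f| = 1.
  apply: (@card1_sub _ _ v _ cQ); last by rewrite inE vq vf.
  by rewrite setIC; apply: setIS.
have dqe : forall e : {set V}, e \subset e1 :|: e2 -> qv :&: e = set0.
  move=> e se; apply/eqP; rewrite -subset0 -D setIC; by apply: setISS.
have n1 : forall e : {set V}, e \in H -> e \subset e1 :|: e2 -> #|f :&: e| != 1.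
  move=> e he se; apply/negP => /eqP c1; apply: nP.
  exact: (GP _ _ _ _ H3 kv hf he cvf c1 (dqe e se)).
have vy : v = y.
  case: (v =P y) => // nvy; exfalso; apply: nP.
  apply: (GP _ _ _ _ H3 hf kv ko _ _ (_ : f :&: qo = set0)).
  - by rewrite setIC.
  - by rewrite Eqq cards1.
  apply/eqP; rewrite -subset0; apply/subsetP => z; rewrite !inE => /andP [zf zo].
  have : z \in f :&: (q1 :|: q2) by rewrite inE zf (subsetP so).
  rewrite Ev inE => /eqP zv; subst z.
  have : v \in qv :&: qo by rewrite inE vq zo.
  by rewrite Eqq inE => /eqP.
have Ef : f = (f :&: (e1 :|: e2)) :|: (f :&: (q1 :|: q2)).
  apply/eqP; rewrite eq_sym eqEcard subUset !subsetIl /= H3 //.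
  have := cardsUI (f :&: (e1 :|: e2)) (f :&: (q1 :|: q2)).
  have -> : (f :&: (e1 :|: e2)) :&: (f :&: (q1 :|: q2)) = set0.
    by apply/eqP; rewrite -subset0 -D; apply: setISS; apply: subsetIr.
  by rewrite cards0 cU cQ addn0 => ->.
have n1' := n1 e1 h1 (subsetUl _ _); have n2' := n1 e2 h2 (subsetUr _ _).
have [E|E] : f :&: (e1 :|: e2) = e1 :\ x \/ f :&: (e1 :|: e2) = e2 :\ x.
  have c1le : #|f :&: e1| <= 2.
    by rewrite -cU; apply: subset_leq_card; apply: setIS; apply: subsetUl.
  case: (#|f :&: e1| =P 2) => [c2|c2].
    by left; exact: sub2 (H3 e1 h1) E12 n2' cU c2.
  right.
  have e0 : f :&: e1 = set0 by apply/eqP; rewrite -cards_eq0; apply: ar3.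
  have cU' : #|f :&: (e2 :|: e1)| = 2 by rewrite setUC.
  have c2' : #|f :&: e2| = 2 by move: cU; rewrite setIUr e0 set0U.
  rewrite setUC; apply: sub2 (H3 e2 h2) _ n1' cU' c2'.
  by rewrite setIC.
  by left; rewrite Ef E Ev vy.
by right; rewrite Ef E Ev vy.
Qed.


Lemma caseA (H : {set {set V}}) (U Q e q f : {set V}) u v :
  uniform3 H -> e \in H -> q \in H -> f \in H -> e \subset U -> q \subset Q ->
  U :&: Q = set0 -> f :&: U = [set u] -> f :&: Q = [set v] ->
  u \in e -> v \in q -> has_P H.
Proof.
move=> H3 he hq hf sU sQ D EU EQ ue vq.
have : u \in f :&: U by rewrite EU set11.
rewrite inE => /andP [uf _].
have : v \in f :&: Q by rewrite EQ set11.
rewrite inE => /andP [vf _].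
apply: (GP _ _ _ _ H3 he hf hq).
- apply: (@card1_sub _ _ u _ (_ : #|[set u]| = 1)); last by rewrite inE ue uf.
    by rewrite -EU setIC; apply: setIS.
  by rewrite cards1.
- apply: (@card1_sub _ _ v _ (_ : #|[set v]| = 1)); last by rewrite inE vq vf.
    by rewrite -EQ; apply: setIS.
  by rewrite cards1.
by apply/eqP; rewrite -subset0 -D; apply: setISS.
Qed.

End S.
Arguments half {V H e1 e2 q1 q2 x y f}.
Arguments caseA {V H U Q e q f u v}.
Arguments ar4 {a}.

Theorem mainTheorem9 (V : finType) (H : {set {set V}})
  (H3 : uniform3 H) (Hfree : PC_free H)
  (e1 e2 : {set V}) (x : V)
  (he1 : e1 \in H) (he2 : e2 \in H) (hx : e1 :&: e2 = [set x])
  (q1 q2 : {set V}) (y : V)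
  (hq1 : q1 \in induced H (~: (e1 :|: e2)))
  (hq2 : q2 \in induced H (~: (e1 :|: e2)))
  (hy : q1 :&: q2 = [set y]) :
  n_meet_both H (e1 :|: e2) (q1 :|: q2) <= 4.
Proof.
case: Hfree => nP _.
move: hq1 hq2; rewrite !inE => /andP [k1 s1] /andP [k2 s2].
have D : (e1 :|: e2) :&: (q1 :|: q2) = set0.
  apply/eqP; rewrite -subset0; apply/subsetP => z; rewrite inE => /andP [zU].
  rewrite inE => /orP [z1|z2].
    by have := subsetP s1 z z1; rewrite inE zU.
  by have := subsetP s2 z z2; rewrite inE zU.
have D' : (q1 :|: q2) :&: (e1 :|: e2) = set0 by rewrite setIC.
rewrite /n_meet_both.
apply: leq_trans (subset_leq_card _) (card_size [:: (e1 :\ x) :|: [set y];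
  (e2 :\ x) :|: [set y]; (q1 :\ y) :|: [set x]; (q2 :\ y) :|: [set x]]).
apply/subsetP => f; rewrite inE => /andP [hf /andP [nU nQ]].
case: (ltnP 1 #|f :&: (e1 :|: e2)|) => [gU|leU].
  have [E|E] := half H3 nP he1 he2 k1 k2 hf hx hy D gU nQ;
    by rewrite E !inE eqxx ?orbT.
case: (ltnP 1 #|f :&: (q1 :|: q2)|) => [gQ|leQ].
  have [E|E] := half H3 nP k1 k2 he1 he2 hf hy hx D' gQ nU;
    by rewrite E !inE eqxx ?orbT.
exfalso; apply: nP.
have cU : #|f :&: (e1 :|: e2)| = 1 by apply: ar4 leU _; rewrite card_gt0.
have cQ : #|f :&: (q1 :|: q2)| = 1 by apply: ar4 leQ _; rewrite card_gt0.
move/eqP/cards1P: cU => [u Eu]; move/eqP/cards1P: cQ => [v Ev].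
have : u \in f :&: (e1 :|: e2) by rewrite Eu set11.
rewrite !inE => /andP [_ /orP uE].
have : v \in f :&: (q1 :|: q2) by rewrite Ev set11.
rewrite !inE => /andP [_ /orP vQ].
case: uE => ue; case: vQ => vq;
  apply: (caseA H3 _ _ hf _ _ D Eu Ev ue vq) => //;
  by rewrite ?subsetUl ?subsetUr.
Qed.
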